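(* In the synchronous $Q$-learning setting of the context, assume $|\mathcal S||\mathcal A|\ge2$ and let $Q^*$ be the unique fixed point of $\mathcal T$. (a) If $\epsilon_k\equiv\epsilon\le\frac{(1-\beta)^2}{640e\log(|\mathcal S||\mathcal A|)}$, then for all $k\ge0$, $\mathbb{E}[\|Q_k-Q^*\|_\infty^2]\le\frac32\|Q_0-Q^*\|_\infty^2\left[1-\frac{(1-\beta)\epsilon}{2}\right]^k+(1+2\|Q^*\|_\infty^2)\frac{256e\log(|\mathcal S||\mathcal A|)\epsilon}{(1-\beta)^2}$. (b) If $\epsilon_k=\epsilon/(k+K)$ with $\epsilon=\frac{4}{1-\beta}$ and $K=\frac{640e\log(|\mathcal S||\mathcal A|)}{(1-\beta)^3}$, then for all $k\ge0$, $\mathbb{E}[\|Q_k-Q^*\|_\infty^2]\le8192e^2(1+2\|Q^*\|_\infty^2+\|Q_0-Q^*\|_\infty^2)\frac{\log(|\mathcal S||\mathcal A|)}{(1-\beta)^3}\frac{1}{k+K}$.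
   Context: Finite MDP: finite state space $\mathcal S$, finite action space $\mathcal A$, transition matrices $P_a(s,s')$, reward $\mathcal R:\mathcal S\times\mathcal A\to[0,1]$, discount $\beta\in(0,1)$. The Bellman optimality operator on $Q\in\mathbb{R}^{|\mathcal S||\mathcal A|}$ is $[\mathcal T(Q)](s,a)=\mathcal R(s,a)+\beta\sum_{s'}P_a(s,s')\max_{a'}Q(s',a')$. Synchronous $Q$-learning: from deterministic $Q_0$, at each iteration $k$ and each $(s,a)$, a successor state $s'_{s,a}\sim P_a(s,\cdot)$ is sampled (independently of the past given the current iterate) and $Q_{k+1}(s,a)=Q_k(s,a)+\epsilon_k(\mathcal R(s,a)+\beta\max_{a'}Q_k(s'_{s,a},a')-Q_k(s,a))$. Logarithms are natural. *)

(* Defs.v *)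
From mathcomp Require Import all_boot.
From Stdlib Require Import Reals.
Set Implicit Arguments. Unset Strict Implicit. Unset Printing Implicit Defensive.
Open Scope R_scope.

Section QL.
Variables (S A : finType).

(* max_{a'} Q(s,a') ; A is nonempty in the theorem (|S||A| >= 2). *)
Definition maxA (Q : S -> A -> R) (s : S) : R :=
  match enum A with
  | a :: l => foldl Rmax (Q s a) (map (Q s) l)
  | nil => 0
  end.

Definition supnorm (Q : S -> A -> R) : R :=
  \big[Rmax/0]_(p : S * A) Rabs (Q p.1 p.2).

Definition Qsub (Q1 Q2 : S -> A -> R) : S -> A -> R := fun s a => Q1 s a - Q2 s a.

Definition bellman (P : A -> S -> S -> R) (rew : S -> A -> R) (beta : R)
    (Q : S -> A -> R) : S -> A -> R :=
  fun s a => rew s a + beta * \big[Rplus/0]_(s' : S) (P a s s' * maxA Q s').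

(* probability of a joint sample sigma(s,a) = s'_{s,a}, independent across (s,a) *)
Definition sample_prob (P : A -> S -> S -> R) (sigma : {ffun S * A -> S}) : R :=
  \big[Rmult/1]_(p : S * A) P p.2 p.1 (sigma p).

Definition qstep (rew : S -> A -> R) (beta : R) (eps : nat -> R) (k : nat)
    (Q : S -> A -> R) (sigma : {ffun S * A -> S}) : S -> A -> R :=
  fun s a => Q s a + eps k * (rew s a + beta * maxA Q (sigma (s, a)) - Q s a).

(* Ev ... k0 n f Q = E[ f(Q_{k0+n}) | Q_{k0} = Q ] *)
Fixpoint Ev (P : A -> S -> S -> R) (rew : S -> A -> R) (beta : R) (eps : nat -> R)
    (k0 n : nat) (f : (S -> A -> R) -> R) (Q : S -> A -> R) {struct n} : R :=
  match n with
  | O => f Q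
  | n'.+1 => \big[Rplus/0]_(sigma : {ffun S * A -> S})
              (sample_prob P sigma * Ev P rew beta eps k0.+1 n' f (qstep rew beta eps k0 Q sigma))
  end.

End QL.

(* Main.v *)
From HB Require Import structures.
Require Import Defs.
From mathcomp Require Import all_boot.
From Stdlib Require Import Reals Lra Lia.
Open Scope R_scope.

Lemma exp_le x y : x <= y -> exp x <= exp y.
Proof. intros [H|H]; [left; apply exp_increasing; auto| subst; lra]. Qed.

Lemma ln_le x y : 0 < x -> x <= y -> ln x <= ln y.
Proof. intros Hx [H|H]; [left; apply ln_increasing; auto| subst; lra]. Qed.

Lemma exp_convex (t x y : R) : 0 <= t <= 1 ->
  exp (t * x + (1 - t) * y) <= t * exp x + (1 - t) * exp y.
Proof.
intros Ht. set z := t * x + (1 - t) * y.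
assert (H1 : exp x = exp z * exp (x - z)) by (rewrite <- exp_plus; f_equal; ring).
assert (H2 : exp y = exp z * exp (y - z)) by (rewrite <- exp_plus; f_equal; ring).
pose proof (exp_ineq1_le (x - z)). pose proof (exp_ineq1_le (y - z)).
pose proof (exp_pos z).
rewrite H1 H2.
assert (t * (exp z * exp (x - z)) >= t * (exp z * (1 + (x - z)))) by
  (apply Rle_ge, Rmult_le_compat_l; [lra| apply Rmult_le_compat_l; lra]).
assert ((1-t) * (exp z * exp (y - z)) >= (1-t) * (exp z * (1 + (y - z)))) by
  (apply Rle_ge, Rmult_le_compat_l; [lra| apply Rmult_le_compat_l; lra]).
assert (t * (exp z * (1 + (x - z))) + (1-t) * (exp z * (1 + (y - z))) = exp z).
{ unfold z; ring. }
lra.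
Qed.

Lemma exp_quad x : x <= /2 -> exp x <= 1 + x + 2 * x ^ 2.
Proof.
intros Hx.
pose proof (exp_ineq1_le (- x)). rewrite exp_Ropp in H.
pose proof (exp_pos x).
assert (H1 : exp x * (1 - x) <= 1).
{ assert (1 - x <= / exp x) by lra.
  apply (Rmult_le_compat_l (exp x)) in H1; [|lra].
  rewrite Rinv_r in H1; lra. }
assert (H2 : 1 <= (1 + x + 2 * x ^ 2) * (1 - x)) by nra.
assert (0 < 1 - x) by lra.
nra.
Qed.

HB.instance Definition _ := Monoid.isComLaw.Build R 0 Rplus (fun x y z => esym (Rplus_assoc x y z)) Rplus_comm Rplus_0_l.
HB.instance Definition _ := Monoid.isComLaw.Build R 1 Rmult (fun x y z => esym (Rmult_assoc x y z)) Rmult_comm Rmult_1_l.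
HB.instance Definition _ := Monoid.isMulLaw.Build R 0 Rmult Rmult_0_l Rmult_0_r.
HB.instance Definition _ := Monoid.isAddLaw.Build R Rmult Rplus Rmult_plus_distr_r Rmult_plus_distr_l.

Lemma rsum_le (I : finType) (F G : I -> R) :
  (forall i, F i <= G i) -> \big[Rplus/0]_(i : I) F i <= \big[Rplus/0]_(i : I) G i.
Proof.
intros H. apply (big_ind2 (fun x y => x <= y)); [lra| intros; lra| auto].
Qed.

Lemma rsum_ge0 (I : finType) (F : I -> R) :
  (forall i, 0 <= F i) -> 0 <= \big[Rplus/0]_(i : I) F i.
Proof. intros H. apply (big_ind (fun x => 0 <= x)); [lra| intros; lra| auto]. Qed.

Lemma prod_ge0 (I : finType) (F : I -> R) :
  (forall i, 0 <= F i) -> 0 <= \big[Rmult/1]_(i : I) F i.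
Proof. intros H. apply (big_ind (fun x => 0 <= x)); [lra| intros; nra| auto]. Qed.

Lemma rsum_mull (I : finType) a (F : I -> R) :
  a * \big[Rplus/0]_(i : I) F i = \big[Rplus/0]_(i : I) (a * F i).
Proof. exact: big_distrr. Qed.

Lemma rsum_plus (I : finType) (F G : I -> R) :
  \big[Rplus/0]_(i : I) (F i + G i) = \big[Rplus/0]_(i : I) F i + \big[Rplus/0]_(i : I) G i.
Proof. exact: big_split. Qed.

Lemma rsum_const (I : finType) c :
  \big[Rplus/0]_(i : I) c = INR #|I| * c.
Proof.
rewrite big_const. elim: #|I| => [|n IH] /=; [lra|].
rewrite IH; simpl; rewrite -?INR_IPR; try (destruct n; simpl; lra).
Qed.

Lemma rsum_exchange (I J : finType) (F : I -> J -> R) :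
  \big[Rplus/0]_(i : I) \big[Rplus/0]_(j : J) F i j =
  \big[Rplus/0]_(j : J) \big[Rplus/0]_(i : I) F i j.
Proof. exact: exchange_big. Qed.

Section Samp.
Variables (S A : finType) (P : A -> S -> S -> R).
Hypothesis hP_nonneg : forall a s s', 0 <= P a s s'.
Hypothesis hP_sum : forall a s, \big[Rplus/0]_(s' : S) P a s s' = 1.

Lemma sp_ge0 sigma : 0 <= sample_prob P sigma.
Proof. apply prod_ge0 => p; auto. Qed.

Lemma sp_marg (p0 : S * A) (g : S -> R) :
  \big[Rplus/0]_(sigma : {ffun S * A -> S}) (sample_prob P sigma * g (sigma p0))
  = \big[Rplus/0]_(s' : S) (P p0.2 p0.1 s' * g s').
Proof.
set F := fun (p : S * A) (s : S) => P p.2 p.1 s * (if p == p0 then g s else 1).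
have E : forall sigma : {ffun S * A -> S},
  sample_prob P sigma * g (sigma p0) = \big[Rmult/1]_(p : S * A) F p (sigma p).
{ move=> sigma. rewrite /sample_prob (bigD1 p0) //= (bigD1 p0 (P := predT)) //=.
  rewrite /F eqxx. rewrite [in RHS](eq_bigr (fun p => P p.2 p.1 (sigma p))).
  - lra.
  - move=> p /negbTE ->. lra. }
rewrite (eq_bigr _ (fun sigma _ => E sigma)).
rewrite -(bigA_distr_bigA (fun p s => F p s)).
rewrite (bigD1 p0) //= /F eqxx [X in _ * X]big1 ?Rmult_1_r.
{ apply eq_bigr => s _; lra. }
move=> p /negbTE Hp; rewrite Hp.
rewrite (eq_bigr (fun s => P p.2 p.1 s)); [apply hP_sum| move=> s _; lra].
Qed.

Lemma sp_sum : \big[Rplus/0]_(sigma : {ffun S * A -> S}) sample_prob P sigma = 1.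
Proof.
case: (pickP (fun _ : S * A => true)) => [p0 _|H].
- have := sp_marg p0 (fun _ => 1).
  rewrite (eq_bigr (fun sigma => sample_prob P sigma)); last by move=> ? _; lra.
  move->. rewrite (eq_bigr (fun s => P p0.2 p0.1 s)); [apply hP_sum| move=> ? _; lra].
- rewrite -(bigA_distr_bigA (fun p s => P p.2 p.1 s)).
  by rewrite big_pred0.
Qed.
End Samp.

Section EvLemmas.
Variables (S A : finType) (P : A -> S -> S -> R) (rew : S -> A -> R) (beta : R) (eps : nat -> R).
Hypothesis hP_nonneg : forall a s s', 0 <= P a s s'.
Hypothesis hP_sum : forall a s, \big[Rplus/0]_(s' : S) P a s s' = 1.

Notation Ev := (Ev P rew beta eps).

Lemma Ev_mono k0 n (f g : (S -> A -> R) -> R) Q :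
  (forall Q, f Q <= g Q) -> Ev k0 n f Q <= Ev k0 n g Q.
Proof.
intros H. elim: n k0 Q => [|n IH] k0 Q /=; [auto|].
apply rsum_le => sigma. apply Rmult_le_compat_l; [apply sp_ge0; auto| apply IH].
Qed.

Lemma Ev_affine k0 n a b (f : (S -> A -> R) -> R) Q :
  Ev k0 n (fun Q => a + b * f Q) Q = a + b * Ev k0 n f Q.
Proof.
elim: n k0 Q => [|n IH] k0 Q /=; [auto|].
rewrite (eq_bigr (fun sigma => a * sample_prob P sigma +
   b * (sample_prob P sigma * Ev k0.+1 n f (qstep rew beta eps k0 Q sigma)))).
- rewrite rsum_plus -!rsum_mull sp_sum // Rmult_1_r; reflexivity.
- move=> sigma _; rewrite IH; lra.
Qed.

Lemma Ev_scale k0 n b (f : (S -> A -> R) -> R) Q :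
  Ev k0 n (fun Q => b * f Q) Q = b * Ev k0 n f Q.
Proof.
elim: n k0 Q => [|n IH] k0 Q /=; [auto|].
rewrite (eq_bigr (fun sigma => b * (sample_prob P sigma * Ev k0.+1 n f (qstep rew beta eps k0 Q sigma)))).
- by rewrite -rsum_mull.
- move=> sigma _; rewrite IH; ring.
Qed.

Lemma Ev_const k0 n a Q : Ev k0 n (fun _ => a) Q = a.
Proof.
elim: n k0 Q => [|n IH] k0 Q /=; [auto|].
rewrite (eq_bigr (fun sigma => a * sample_prob P sigma)).
- rewrite -rsum_mull sp_sum //; lra.
- move=> sigma _; rewrite IH; lra.
Qed.

Lemma Ev_last k0 n f Q :
  Ev k0 n.+1 f Q = Ev k0 n (fun Q' => Ev (k0 + n)%nat 1 f Q') Q.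
Proof.
elim: n k0 Q => [|n IH] k0 Q.
- by rewrite /= addn0.
- change (\big[Rplus/0]_sigma (sample_prob P sigma * Ev k0.+1 n.+1 f (qstep rew beta eps k0 Q sigma))
   = \big[Rplus/0]_sigma (sample_prob P sigma * Ev k0.+1 n (fun Q' => Ev (k0 + n.+1)%nat 1 f Q') (qstep rew beta eps k0 Q sigma))).
  apply eq_bigr => sigma _. rewrite IH. by rewrite addSnnS.
Qed.
End EvLemmas.

Lemma foldl_max_ge (T : Type) (f : T -> R) l x0 :
  x0 <= foldl Rmax x0 (map f l) /\ (forall y, List.In y l -> f y <= foldl Rmax x0 (map f l)).
Proof.
elim: l x0 => [|y l IH] x0 /=; first by split; [lra| tauto].
have [H1 H2] := IH (Rmax x0 (f y)).
pose proof (Rmax_l x0 (f y)). pose proof (Rmax_r x0 (f y)).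
split; [lra|]. move=> z [<-|Hz]; [lra| auto].
Qed.

Lemma foldl_max_att (T : Type) (f : T -> R) l x0 :
  foldl Rmax x0 (map f l) = x0 \/ exists y, foldl Rmax x0 (map f l) = f y.
Proof.
elim: l x0 => [|y l IH] x0 /=; first by left.
case: (IH (Rmax x0 (f y))) => [->|[z Hz]]; last by right; exists z.
destruct (Rle_dec x0 (f y)).
- right; exists y; rewrite Rmax_right //.
- left; rewrite Rmax_left //; lra.
Qed.

Section MaxLemmas.
Variables (S A : finType) (a0 : A).

Lemma maxA_ge (Q : S -> A -> R) s a : Q s a <= maxA Q s.
Proof.
rewrite /maxA. have : a \in enum A by rewrite mem_enum.
case: (enum A) => [//|b l] /=. rewrite inE => /orP [/eqP ->|Ha].
- by have [H _] := foldl_max_ge _ (Q s) l (Q s b).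
- have [_ H] := foldl_max_ge _ (Q s) l (Q s b). apply H.
  elim: l Ha {H} => [//|c l IH] /=; rewrite inE => /orP [/eqP ->|H]; [left|right]; auto.
Qed.

Lemma maxA_att (Q : S -> A -> R) s : exists a, maxA Q s = Q s a.
Proof.
rewrite /maxA. have : a0 \in enum A by rewrite mem_enum.
case: (enum A) => [//|b l] _ /=.
case: (foldl_max_att _ (Q s) l (Q s b)) => [->|[y ->]]; by eexists.
Qed.

Lemma sup_ge (Q : S -> A -> R) s a : Rabs (Q s a) <= supnorm Q.
Proof.
rewrite /supnorm.
have : (s, a) \in index_enum (S * A)%type by rewrite mem_index_enum.
elim: (index_enum _) => [//|p r IH]. rewrite big_cons inE => /orP [/eqP <-|H] /=.
- apply Rmax_l.
- eapply Rle_trans; [apply IH, H| apply Rmax_r].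
Qed.

Lemma sup_ge0 (Q : S -> A -> R) : 0 <= supnorm Q.
Proof.
apply (big_ind (fun x => 0 <= x)); [lra| |move=> p _; apply Rabs_pos].
move=> x y Hx Hy; eapply Rle_trans; [apply Hx| apply Rmax_l].
Qed.

Lemma sup_att (Q : S -> A -> R) : supnorm Q = 0 \/ exists p : S * A, supnorm Q = Rabs (Q p.1 p.2).
Proof.
apply (big_ind (fun x => x = 0 \/ exists p : S * A, x = Rabs (Q p.1 p.2))); [by left| |].
- move=> x y Hx Hy. destruct (Rle_dec x y); [rewrite Rmax_right //| rewrite Rmax_left //; lra].
- move=> p _; right; by exists p.
Qed.

Lemma maxA_lip (Q Q' : S -> A -> R) s :
  Rabs (maxA Q s - maxA Q' s) <= supnorm (Qsub Q Q').
Proof.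
have [a1 H1] := maxA_att Q s. have [a2 H2] := maxA_att Q' s.
have := maxA_ge Q s a2. have := maxA_ge Q' s a1.
have := sup_ge (Qsub Q Q') s a1. have := sup_ge (Qsub Q Q') s a2.
rewrite /Qsub => h1 h2 h3 h4.
apply Rabs_le. split_Rabs; lra.
Qed.

Lemma maxA_bound (Q : S -> A -> R) s : Rabs (maxA Q s) <= supnorm Q.
Proof.
have [a1 H1] := maxA_att Q s. have := maxA_ge Q s a1.
have := sup_ge Q s a1. rewrite H1. move=> h _; exact h.
Qed.
End MaxLemmas.

Lemma ln_le_sub1 t : 0 < t -> ln t <= t - 1.
Proof. intros Ht. pose proof (exp_ineq1_le (ln t)). rewrite exp_ln in H; lra. Qed.

Lemma lnratio_decr y z : 0 < y -> 1 <= ln y -> y <= z -> ln z / z <= ln y / y.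
Proof.
intros Hy Hl Hyz.
set t := z / y.
assert (Ht : 1 <= t) by (unfold t; apply (Rmult_le_reg_r y); [lra|]; field_simplify; lra).
assert (Hz : z = y * t) by (unfold t; field; lra).
rewrite Hz ln_mult; try lra.
pose proof (ln_le_sub1 t ltac:(lra)).
assert (ln y + ln t <= t * ln y) by nra.
apply (Rmult_le_reg_r (y * t)); [nra|].
field_simplify; nra.
Qed.

Lemma lnsq_deriv y : 0 < y -> derivable_pt_lim (fun x => ln x * ln x) y (2 * ln y / y).
Proof.
intros Hy.
have H := derivable_pt_lim_mult ln ln y (/ y) (/ y) (derivable_pt_lim_ln y Hy) (derivable_pt_lim_ln y Hy).
replace (2 * ln y / y) with (/ y * ln y + ln y * / y) by (field; lra).
exact H.
Qed.

Lemma lnsq_tangent x m : 0 < x -> 0 < m -> 1 <= ln x -> 1 <= ln m ->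
  ln x * ln x <= ln m * ln m + 2 * ln m / m * (x - m).
Proof.
intros Hx Hm Hlx Hlm.
destruct (Rtotal_order x m) as [Hlt|[Heq|Hgt]].
- destruct (MVT_cor2 (fun x => ln x * ln x) (fun y => 2 * ln y / y) x m Hlt) as [c [Hc1 Hc2]].
  { intros c Hc; apply lnsq_deriv; lra. }
  assert (Hlc : 1 <= ln c) by (eapply Rle_trans; [apply Hlx| apply ln_le; lra]).
  have := lnratio_decr c m ltac:(lra) Hlc ltac:(lra).
  intros Hd. assert (2 * ln m / m <= 2 * ln c / c).
  { unfold Rdiv in *. lra. }
  nra.
- subst; lra.
- destruct (MVT_cor2 (fun x => ln x * ln x) (fun y => 2 * ln y / y) m x Hgt) as [c [Hc1 Hc2]].
  { intros c Hc; apply lnsq_deriv; lra. }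
  have := lnratio_decr m c Hm Hlm ltac:(lra).
  intros Hd. assert (2 * ln c / c <= 2 * ln m / m).
  { unfold Rdiv in *. lra. }
  nra.
Qed.

Section GF.
Variable I : finType.
Definition G (y : I -> R) := \big[Rplus/0]_(i : I) (exp (y i) + exp (- y i)).

Lemma cosh2 u : 2 <= exp u + exp (- u).
Proof. pose proof (exp_ineq1_le u); pose proof (exp_ineq1_le (-u)); lra. Qed.

Lemma G_ge y : 2 * INR #|I| <= G y.
Proof.
rewrite /G. eapply Rle_trans; last first.
- apply rsum_le => i. apply (cosh2 (y i)).
- rewrite rsum_const; lra.
Qed.

Lemma G_term y i : exp (Rabs (y i)) <= G y.
Proof.
rewrite /G (bigD1 i) //=.
have : 0 <= \big[Rplus/0]_(j | j != i) (exp (y j) + exp (- y j)).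
{ apply (big_ind (fun x => 0 <= x)); [lra| intros; lra| intros; pose proof (exp_pos (y i0)); pose proof (exp_pos (- y i0)); lra]. }
pose proof (exp_pos (y i)); pose proof (exp_pos (- y i)).
unfold Rabs; destruct (Rcase_abs (y i)); lra.
Qed.

Hypothesis Hne : (0 < #|I|)%nat.

Lemma INR_card_pos : 0 < INR #|I|.
Proof. apply lt_0_INR. apply/ltP. exact Hne. Qed.

Lemma G_ge1 y : 1 <= G y.
Proof.
have := G_ge y. have : 1 <= INR #|I|.
{ apply (le_INR 1). apply/leP. exact Hne. }
lra.
Qed.

Lemma G_pos y : 0 < G y.
Proof. pose proof (G_ge y); pose proof INR_card_pos; lra. Qed.

Lemma G_pow_mean y th : 0 <= th <= 1 ->
  \big[Rplus/0]_(i : I) (exp (th * y i) + exp (- (th * y i)))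
  <= exp ((1 - th) * ln (2 * INR #|I|) + th * ln (G y)).
Proof.
intros Hth.
set n := INR #|I|. have Hn : 0 < n by apply INR_card_pos.
set L := ln (G y). set c := ln (2 * n).
set X := exp (th * L + (1 - th) * c).
have HG := G_pos y.
have key : forall u, exp (th * u) <= (th * (exp u / G y) + (1 - th) * / (2 * n)) * X.
{ move=> u.
  have -> : th * u = th * (u - L) + (1 - th) * (- c) + (th * L + (1 - th) * c) by ring.
  rewrite exp_plus. apply Rmult_le_compat_r; [apply Rlt_le, exp_pos|].
  eapply Rle_trans; [apply exp_convex; lra|].
  rewrite /Rminus exp_plus exp_Ropp /L exp_ln // exp_Ropp /c exp_ln; [|lra].
  right; unfold Rdiv; ring. }
eapply Rle_trans.
{ apply rsum_le => i. apply Rplus_le_compat; [apply key|].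
  rewrite Ropp_mult_distr_r. apply key. }
rewrite (eq_bigr (fun i => X * th / G y * (exp (y i) + exp (- y i)) + X * (1 - th) * / n)).
2: { move=> i _. field. split; lra. }
rewrite rsum_plus -rsum_mull rsum_const.
fold (G y). rewrite -/n.
idtac.
rewrite /X /c /L (Rplus_comm ((1 - th) * _)). right; field; lra.
Qed.

Lemma G_scale y r : 1 <= r -> G (fun i => r * y i) <= exp (r * ln (G y)).
Proof.
intros Hr. have HG := G_pos y. set L := ln (G y).
have key : forall u, exp u <= G y -> exp (r * u) <= exp (u - L) * exp (r * L).
{ move=> u Hu. rewrite -exp_plus. apply exp_le.
  have : u <= L by (rewrite /L -(ln_exp u); apply ln_le; [apply exp_pos| exact Hu]).
  nra. }
eapply Rle_trans.
{ apply rsum_le => i. apply Rplus_le_compat.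
  - apply key. eapply Rle_trans; [|apply (G_term y i)]. apply exp_le, Rle_abs.
  - rewrite Ropp_mult_distr_r. apply key. eapply Rle_trans; [|apply (G_term y i)].
    apply exp_le. rewrite -Rabs_Ropp; apply Rle_abs. }
rewrite (eq_bigr (fun i => exp (r * L) / G y * (exp (y i) + exp (- y i)))).
2: { move=> i _. rewrite /Rminus !exp_plus exp_Ropp /L exp_ln //. field. lra. }
rewrite -rsum_mull. fold (G y). right; field; lra.
Qed.
End GF.

Lemma mgf_bound (T : finType) (q W : T -> R) (t c : R) :
  (forall s, 0 <= q s) -> \big[Rplus/0]_(s : T) q s = 1 ->
  \big[Rplus/0]_(s : T) (q s * W s) = 0 ->
  (forall s, Rabs (W s) <= c) -> Rabs t * c <= / 2 ->
  \big[Rplus/0]_(s : T) (q s * exp (t * W s)) <= exp (2 * t ^ 2 * c ^ 2).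
Proof.
intros Hq H1 H0 HW Htc.
eapply Rle_trans.
{ apply rsum_le => s. apply Rmult_le_compat_l; [apply Hq|].
  eapply Rle_trans; [apply exp_quad|].
  - have := HW s. have := Rabs_pos t. intros. eapply Rle_trans; [apply Rle_abs|].
    rewrite Rabs_mult. eapply Rle_trans; [|apply Htc]. apply Rmult_le_compat_l; auto.
  - have : (t * W s) ^ 2 <= t ^ 2 * c ^ 2.
    { have h : Rabs (t * W s) <= Rabs t * c.
      { rewrite Rabs_mult. apply Rmult_le_compat_l; [apply Rabs_pos| apply HW]. }
      have h0 := Rabs_pos (t * W s).
      rewrite -(pow2_abs (t * W s)).
      have -> : t ^ 2 * c ^ 2 = (Rabs t * c) ^ 2 by rewrite -(pow2_abs t); ring.
      nra. }
    intros Hb. set v := t * W s.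
    instantiate (1 := 1 + t * W s + 2 * (t ^ 2 * c ^ 2)). unfold v in *. lra. }
rewrite (eq_bigr (fun s => (1 + 2 * (t ^ 2 * c ^ 2)) * q s + t * (q s * W s))).
2: { move=> s _; ring. }
rewrite rsum_plus -!rsum_mull H1 H0.
pose proof (exp_ineq1_le (2 * t ^ 2 * c ^ 2)). lra.
Qed.

Section EvJ.
Variables (S A : finType) (P : A -> S -> S -> R) (rew : S -> A -> R) (beta : R) (eps : nat -> R).
Hypothesis hP_nonneg : forall a s s', 0 <= P a s s'.
Hypothesis hP_sum : forall a s, \big[Rplus/0]_(s' : S) P a s s' = 1.
Notation Ev := (Ev P rew beta eps).

Lemma Ev_ge k0 n (g : (S -> A -> R) -> R) a Q : (forall Q, a <= g Q) -> a <= Ev k0 n g Q.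
Proof.
intros H. rewrite -{1}(Ev_const _ _ _ rew beta eps hP_sum k0 n a Q).
apply Ev_mono; auto.
Qed.

Lemma Ev_jensen_pow k0 n (g : (S -> A -> R) -> R) Q th :
  (forall Q, 1 <= g Q) -> 0 <= th <= 1 ->
  Ev k0 n (fun Q => exp (th * ln (g Q))) Q <= exp (th * ln (Ev k0 n g Q)).
Proof.
intros Hg Hth. set m := Ev k0 n g Q.
have Hm : 1 <= m by apply Ev_ge.
set M := exp (th * ln m).
eapply Rle_trans.
{ apply (Ev_mono _ _ _ _ _ _ hP_nonneg) with (g := fun Q => (1 - th) * M + (th * M / m) * g Q).
  move=> Q'. have Hg' := Hg Q'.
  have -> : th * ln (g Q') = th * (ln (g Q') - ln m) + (1 - th) * 0 + th * ln m by ring.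
  rewrite exp_plus. 
  eapply Rle_trans. { apply Rmult_le_compat_r; [apply Rlt_le, exp_pos| apply exp_convex; lra]. }
  rewrite exp_0 /Rminus exp_plus exp_Ropp !exp_ln; try lra.
  right. rewrite /M. field. lra. }
rewrite Ev_affine //. fold m. right. field. lra.
Qed.

Lemma Ev_jensen_lnsq k0 n (g : (S -> A -> R) -> R) Q :
  (forall Q, exp 1 <= g Q) ->
  Ev k0 n (fun Q => ln (g Q) * ln (g Q)) Q <= ln (Ev k0 n g Q) * ln (Ev k0 n g Q).
Proof.
intros Hg. set m := Ev k0 n g Q.
have Hm : exp 1 <= m by apply Ev_ge.
have He := exp_pos 1.
have Hlm : 1 <= ln m by (rewrite -(ln_exp 1); apply ln_le; lra).
eapply Rle_trans.
{ apply (Ev_mono _ _ _ _ _ _ hP_nonneg) with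
    (g := fun Q => (ln m * ln m - 2 * ln m / m * m) + (2 * ln m / m) * g Q).
  move=> Q'. have Hg' := Hg Q'.
  have Hl : 1 <= ln (g Q') by (rewrite -(ln_exp 1); apply ln_le; lra).
  have := lnsq_tangent (g Q') m ltac:(lra) ltac:(lra) Hl Hlm. lra. }
rewrite Ev_affine //. fold m. lra.
Qed.
End EvJ.

Section Core.
Variables (S A : finType) (P : A -> S -> S -> R) (rew : S -> A -> R) (beta : R) (Qstar : S -> A -> R).
Hypothesis hP_nonneg : forall a s s', 0 <= P a s s'.
Hypothesis hP_sum : forall a s, \big[Rplus/0]_(s' : S) P a s s' = 1.
Hypothesis hbeta : 0 < beta < 1.
Hypothesis hfix : forall s a, bellman P rew beta Qstar s a = Qstar s a.
Variable a0 : A.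
Hypothesis hS : (0 < #|S|)%nat.
Hypothesis hA : (0 < #|A|)%nat.

Definition err (Q : S -> A -> R) (p : S * A) := Q p.1 p.2 - Qstar p.1 p.2.
Definition Phi lam Q := G _ (fun p : S * A => lam * err Q p).
Definition mstar (p : S * A) := \big[Rplus/0]_(s' : S) (P p.2 p.1 s' * maxA Qstar s').
Definition Wn (p : S * A) (s' : S) := beta * (maxA Qstar s' - mstar p).
Definition qs := supnorm Qstar.
Definition cc := 1 + 2 * qs.

Lemma hSA : (0 < #|{: (S * A)%type}|)%nat.
Proof. by rewrite card_prod muln_gt0 hS hA. Qed.

Lemma Phi_pos lam Q : 0 < Phi lam Q.
Proof. apply G_pos. by rewrite card_prod muln_gt0 hS hA. Qed.

Lemma sup_le_lnPhi lam Q : 0 <= lam -> lam * supnorm (Qsub Q Qstar) <= ln (Phi lam Q).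
Proof.
intros Hl. have HP := Phi_pos lam Q.
have H1 : 1 <= Phi lam Q.
{ apply G_ge1. by rewrite card_prod muln_gt0 hS hA. }
case: (sup_att _ _ (Qsub Q Qstar)) => [->|[p ->]].
- rewrite Rmult_0_r -ln_1. apply ln_le; lra.
- rewrite -(ln_exp (lam * _)). apply ln_le; [apply exp_pos|].
  eapply Rle_trans; [|apply (G_term _ (fun p => lam * err Q p) p)].
  apply exp_le. rewrite Rabs_mult (Rabs_pos_eq lam Hl). right; reflexivity.
Qed.

Lemma mstar_bound p : Rabs (mstar p) <= qs.
Proof.
have Hb : forall s', - qs <= maxA Qstar s' <= qs.
{ move=> s'. have := maxA_bound S A a0 Qstar s'. rewrite /qs. intros; split_Rabs; lra. }
have H1 : mstar p <= qs.
{ rewrite /mstar. eapply Rle_trans.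
  { apply rsum_le => s'. apply Rmult_le_compat_l; [apply hP_nonneg| apply (Hb s')]. }
  rewrite (eq_bigr (fun s' => qs * P p.2 p.1 s')); last by move=> ? _; ring.
  rewrite -rsum_mull hP_sum; lra. }
have H2 : - qs <= mstar p.
{ rewrite /mstar. eapply Rle_trans; last first.
  { apply rsum_le => s'. apply Rmult_le_compat_l; [apply hP_nonneg| apply (Hb s')]. }
  rewrite (eq_bigr (fun s' => - qs * P p.2 p.1 s')); last by move=> ? _; ring.
  rewrite -rsum_mull hP_sum; lra. }
split_Rabs; lra.
Qed.

Lemma Wn_bound p s' : Rabs (Wn p s') <= cc.
Proof.
rewrite /Wn /cc. have := mstar_bound p. have := maxA_bound S A a0 Qstar s'. rewrite -/qs.
intros h1 h2. rewrite Rabs_mult Rabs_pos_eq; [|lra].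
have : Rabs (maxA Qstar s' - mstar p) <= 2 * qs.
{ 
  unfold Rminus. eapply Rle_trans; [apply Rabs_triang|]. rewrite Rabs_Ropp. lra. }
have := Rabs_pos (maxA Qstar s' - mstar p). nra.
Qed.

Lemma Wn_mean p : \big[Rplus/0]_(s' : S) (P p.2 p.1 s' * Wn p s') = 0.
Proof.
rewrite /Wn (eq_bigr (fun s' => beta * (P p.2 p.1 s' * maxA Qstar s') + (- beta * mstar p) * P p.2 p.1 s')).
- rewrite rsum_plus -!rsum_mull hP_sum -/(mstar p). ring.
- move=> s' _; ring.
Qed.

Lemma err_step (eps : nat -> R) j Q (sigma : {ffun S * A -> S}) (p : S * A) :
  err (qstep rew beta eps j Q sigma) p =
  (1 - eps j) * err Q p + eps j * (beta * (maxA Q (sigma p) - maxA Qstar (sigma p)))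
  + eps j * Wn p (sigma p).
Proof.
case: p => s a. rewrite /err /qstep /Wn /mstar /=.
have := hfix s a. rewrite /bellman. move=> h. rewrite -h. ring.
Qed.

Lemma Phi_scale lam lam' Q : 0 < lam -> lam <= lam' ->
  ln (Phi lam' Q) <= lam' / lam * ln (Phi lam Q).
Proof.
intros Hl Hll.
have -> : Phi lam' Q = G _ (fun p : S * A => (lam' / lam) * (lam * err Q p)).
{ rewrite /Phi /G. apply eq_bigr => p _. by rewrite (_ : lam' / lam * (lam * err Q p) = lam' * err Q p) //; field; lra. }
rewrite -(ln_exp (lam' / lam * _)). apply ln_le; first by apply: G_pos; rewrite card_prod muln_gt0 hS hA.
apply: G_scale; first by rewrite card_prod muln_gt0 hS hA. apply (Rmult_le_reg_r lam); [lra|]. field_simplify; lra.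
Qed.

Lemma step_bound (eps : nat -> R) j lam lam' Q :
  0 < eps j <= 1 -> 0 < lam -> lam <= lam' -> lam' * eps j * cc <= /2 ->
  Ev P rew beta eps j 1 (Phi lam') Q <=
  exp (2 * lam' ^ 2 * eps j ^ 2 * cc ^ 2 + eps j * ln (2 * INR (#|S| * #|A|))
       + (1 - eps j * (1 - beta)) * (lam' / lam) * ln (Phi lam Q)).
Proof.
intros He Hl Hll Hc.
set M := supnorm (Qsub Q Qstar). set t := lam' * (eps j).
have HM : 0 <= M by apply sup_ge0.
have Ht : 0 < t by (rewrite /t; apply Rmult_lt_0_compat; lra).
set B := exp (2 * t ^ 2 * cc ^ 2).
set Xp := fun p : S * A => exp (lam' * ((1 - (eps j)) * err Q p + (eps j) * beta * M)).
set Xm := fun p : S * A => exp (lam' * (- ((1 - (eps j)) * err Q p) + (eps j) * beta * M)).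
have Hpt : forall (sigma : {ffun S * A -> S}),
  Phi lam' (qstep rew beta eps j Q sigma) <=
  \big[Rplus/0]_(p : S * A) (Xp p * exp (t * Wn p (sigma p)) + Xm p * exp ((- t) * Wn p (sigma p))).
{ move=> sigma. rewrite /Phi /G. apply rsum_le => p.
  rewrite err_step.
  have HD : Rabs (beta * (maxA Q (sigma p) - maxA Qstar (sigma p))) <= beta * M.
  { rewrite Rabs_mult Rabs_pos_eq; [|lra]. apply Rmult_le_compat_l; [lra|]. apply maxA_lip, a0. }
  set D := beta * (maxA Q (sigma p) - maxA Qstar (sigma p)) in HD *.
  apply Rplus_le_compat.
  - rewrite /Xp -exp_plus. apply exp_le. rewrite /t.
    have : D <= beta * M by (eapply Rle_trans; [apply Rle_abs| exact HD]).
    move=> hD. have := Rmult_le_compat_l (lam' * eps j) _ _ (Rlt_le _ _ Ht) hD. nra.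
  - rewrite /Xm -exp_plus. apply exp_le. rewrite /t.
    have : - D <= beta * M by (eapply Rle_trans; [apply Rle_abs| rewrite Rabs_Ropp; exact HD]).
    move=> hD. have := Rmult_le_compat_l (lam' * eps j) _ _ (Rlt_le _ _ Ht) hD. nra. }
rewrite /=.
eapply Rle_trans.
{ apply rsum_le => sigma. apply Rmult_le_compat_l; [apply sp_ge0; auto| apply Hpt]. }
rewrite (eq_bigr (fun sigma => \big[Rplus/0]_(p : S * A)
   (Xp p * (sample_prob P sigma * exp (t * Wn p (sigma p))) +
    Xm p * (sample_prob P sigma * exp ((- t) * Wn p (sigma p)))))).
2: { move=> sigma _. rewrite rsum_mull. apply eq_bigr => p _. ring. }
rewrite rsum_exchange.
rewrite (eq_bigr (fun p => Xp p * \big[Rplus/0]_(s' : S) (P p.2 p.1 s' * exp (t * Wn p s')) +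
                          Xm p * \big[Rplus/0]_(s' : S) (P p.2 p.1 s' * exp ((- t) * Wn p s')))).
2: { move=> p _. rewrite rsum_plus -!rsum_mull.
     rewrite (sp_marg _ _ _ hP_sum p (fun s' => exp (t * Wn p s'))).
     rewrite (sp_marg _ _ _ hP_sum p (fun s' => exp ((- t) * Wn p s'))). done. }
have Hmgf : forall p tt, Rabs tt = t ->
   \big[Rplus/0]_(s' : S) (P p.2 p.1 s' * exp (tt * Wn p s')) <= B.
{ move=> p tt htt. rewrite /B.
  have -> : t ^ 2 = tt ^ 2 by rewrite -htt pow2_abs.
  apply mgf_bound; [move=> s'; apply hP_nonneg| apply hP_sum| apply Wn_mean| apply Wn_bound|].
  rewrite htt /t. lra. }
have HXp : forall p, 0 <= Xp p by move=> p; apply Rlt_le, exp_pos.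
have HXm : forall p, 0 <= Xm p by move=> p; apply Rlt_le, exp_pos.
eapply Rle_trans.
{ apply rsum_le => p. apply Rplus_le_compat; apply Rmult_le_compat_l; auto; apply Hmgf.
  - by rewrite Rabs_pos_eq; lra.
  - by rewrite Rabs_Ropp Rabs_pos_eq; lra. }
rewrite (eq_bigr (fun p => (B * exp (lam' * (eps j * beta * M))) *
   (exp ((1 - eps j) * (lam' * err Q p)) + exp (- ((1 - eps j) * (lam' * err Q p)))))).
2: { move=> p _. rewrite /Xp /Xm.
     rewrite (_ : lam' * ((1 - eps j) * err Q p + eps j * beta * M) = lam' * (eps j * beta * M) + (1 - eps j) * (lam' * err Q p)); last by ring.
     rewrite (_ : lam' * (- ((1 - eps j) * err Q p) + eps j * beta * M) = lam' * (eps j * beta * M) + - ((1 - eps j) * (lam' * err Q p))); last by ring.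
     rewrite !exp_plus. ring. }
rewrite -rsum_mull.
have HPM := G_pow_mean _ hSA (fun p : S * A => lam' * err Q p) (1 - eps j) ltac:(lra).
eapply Rle_trans.
{ apply Rmult_le_compat_l; [apply Rlt_le, Rmult_lt_0_compat; apply exp_pos| exact HPM]. }
rewrite card_prod.
have HL1 := sup_le_lnPhi lam' Q ltac:(lra). rewrite -/M in HL1.
have HL2 := Phi_scale lam lam' Q Hl Hll.
have HL0 : 0 <= ln (Phi lam Q).
{ rewrite -ln_1. apply ln_le; [lra|]. apply G_ge1. by rewrite card_prod muln_gt0 hS hA. }
rewrite /B -!exp_plus. apply exp_le.
change (G _ (fun p : S * A => lam' * err Q p)) with (Phi lam' Q).
set L' := ln (Phi lam' Q) in HL1 HL2 *. set L := ln (Phi lam Q) in HL0 HL2 *.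
have Hr : 0 <= 1 - eps j * (1 - beta) by nra.
have h1 : eps j * beta * (lam' * M) <= eps j * beta * L'.
{ apply Rmult_le_compat_l; [nra| lra]. }
have h2 : (1 - eps j * (1 - beta)) * L' <= (1 - eps j * (1 - beta)) * (lam' / lam * L).
{ apply Rmult_le_compat_l; lra. }
rewrite /t. 
have -> : (1 - (1 - eps j)) = eps j by ring.
have -> : 2 * (lam' * eps j) ^ 2 * cc ^ 2 = 2 * (lam' * (lam' * 1)) * (eps j * (eps j * 1)) * (cc * (cc * 1)) by ring.
have -> : (1 - eps j * (1 - beta)) * (lam' / lam) * L = (1 - eps j * (1 - beta)) * (lam' / lam * L) by ring.
rewrite (_ : (1 - eps j * (1 - beta)) * L' = (1 - eps j) * L' + eps j * beta * L') in h2; last by ring.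
have h1' : lam' * (eps j * beta * M) <= eps j * beta * L'.
{ rewrite (_ : lam' * (eps j * beta * M) = eps j * beta * (lam' * M)); [exact h1| ring]. }
set X := ln (2 * INR _). lra.
Qed.

Lemma G_upper (y : S * A -> R) M : (forall p, Rabs (y p) <= M) ->
  G _ y <= 2 * INR (#|S| * #|A|) * exp M.
Proof.
intros H. rewrite /G. eapply Rle_trans.
{ apply rsum_le => p. instantiate (1 := fun _ => 2 * exp M).
  have := H p. intros h. simpl.
  have h1 : y p <= M by (eapply Rle_trans; [apply Rle_abs| exact h]).
  have h2 : - y p <= M by (eapply Rle_trans; [apply Rle_abs| rewrite Rabs_Ropp; exact h]).
  have := exp_le _ _ h1. have := exp_le _ _ h2. lra. }
rewrite rsum_const card_prod. right. ring.
Qed.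

Hypothesis HN : 2 <= INR (#|S| * #|A|).

Section Main.
Variables (eps : nat -> R) (lam : nat -> R) (Q0 : S -> A -> R).
Hypothesis Heps : forall j, 0 < eps j <= 1.
Hypothesis Hlam : forall j, 0 < lam j.
Hypothesis Hmon : forall j, lam j <= lam j.+1.
Hypothesis Hcon : forall j, lam j.+1 * (1 - eps j * (1 - beta)) <= lam j.
Hypothesis Hc : forall j, lam j.+1 * eps j * cc <= /2.

Definition lnN2 := ln (2 * INR (#|S| * #|A|)).

Fixpoint vv (k : nat) : R :=
  match k with
  | O => lnN2 / lam 0 + supnorm (Qsub Q0 Qstar)
  | j.+1 => (1 - eps j * (1 - beta)) * vv j + 2 * lam j.+1 * eps j ^ 2 * cc ^ 2
            + eps j * lnN2 / lam j.+1
  end.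

Lemma mainU k : ln (Ev P rew beta eps 0 k (Phi (lam k)) Q0) <= lam k * vv k.
Proof.
elim: k => [|k IH].
- rewrite /= /Phi. set E0 := supnorm (Qsub Q0 Qstar).
  have HE0 : 0 <= E0 by apply sup_ge0.
  have Hl0 := Hlam 0.
  have H := G_upper (fun p : S * A => lam 0 * err Q0 p) (lam 0 * E0).
  have HG := G_pos _ hSA (fun p : S * A => lam 0 * err Q0 p).
  eapply Rle_trans. { apply ln_le; [exact HG| apply H].
    move=> p. rewrite Rabs_mult Rabs_pos_eq; [|lra]. apply Rmult_le_compat_l; [lra|].
    case: p => s a. exact (sup_ge _ _ (Qsub Q0 Qstar) s a). }
  rewrite ln_mult; [|lra| apply exp_pos]. rewrite ln_exp -/lnN2.
  right. field. lra.
- have Hl := Hlam k. have Hl' := Hlam k.+1. have Hm := Hmon k. have He := Heps k.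
  have Hco := Hcon k. have Hcc := Hc k.
  set a := 2 * lam k.+1 ^ 2 * eps k ^ 2 * cc ^ 2 + eps k * lnN2.
  set th := (1 - eps k * (1 - beta)) * (lam k.+1 / lam k).
  have Hth : 0 <= th <= 1.
  { rewrite /th. have : 0 <= 1 - eps k * (1 - beta) by nra.
    intros h0. split.
    - apply Rmult_le_pos; [lra| apply Rlt_le, Rdiv_lt_0_compat; lra].
    - apply (Rmult_le_reg_r (lam k)); [lra|]. field_simplify; [|lra]. lra. }
  have Hg1 : forall lm Q, 1 <= Phi lm Q by move=> lm Q; apply G_ge1, hSA.
  have Hst : forall Q, Ev P rew beta eps k 1 (Phi (lam k.+1)) Q <= exp a * exp (th * ln (Phi (lam k) Q)).
  { move=> Q. rewrite -exp_plus. apply (Rle_trans _ _ _ (step_bound eps k (lam k) (lam k.+1) Q He Hl Hm Hcc)).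
    right. f_equal; try (rewrite /a /th /lnN2; ring). }
  rewrite Ev_last add0n.
  have HEv1 : 1 <= Ev P rew beta eps 0 k (Phi (lam k)) Q0.
  { apply: Ev_ge; auto. }
  eapply Rle_trans.
  { apply ln_le.
    - have : 1 <= Ev P rew beta eps 0 k (fun Q' => Ev P rew beta eps k 1 (Phi (lam k.+1)) Q') Q0.
      { apply: Ev_ge; auto. move=> Q. apply: Ev_ge; auto. }
      lra.
    - apply: Ev_mono; auto. exact Hst. }
  rewrite Ev_scale.
  have HJ := Ev_jensen_pow _ _ P rew beta eps hP_nonneg hP_sum 0 k (Phi (lam k)) Q0 th (Hg1 (lam k)) Hth.
  have Hpos : 1 <= Ev P rew beta eps 0 k (fun Q => exp (th * ln (Phi (lam k) Q))) Q0.
  { apply: Ev_ge; auto. move=> Q. rewrite -exp_0. apply exp_le.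
    apply Rmult_le_pos; [lra|]. rewrite -ln_1. apply ln_le; [lra| apply Hg1]. }
  eapply Rle_trans.
  { apply ln_le; [apply Rmult_lt_0_compat; [apply exp_pos| lra]|].
    apply Rmult_le_compat_l; [apply Rlt_le, exp_pos| exact HJ]. }
  rewrite -exp_plus ln_exp.
  have Hv : th * ln (Ev P rew beta eps 0 k (Phi (lam k)) Q0) <= th * (lam k * vv k).
  { apply Rmult_le_compat_l; [lra| exact IH]. }
  eapply Rle_trans; [apply Rplus_le_compat_l, Hv|].
  right. rewrite /a /th /=. field. lra.
Qed.

Lemma mainE k : Ev P rew beta eps 0 k (fun Q => supnorm (Qsub Q Qstar) ^ 2) Q0 <= vv k ^ 2.
Proof.
have Hl := Hlam k.
have Hg : forall Q, exp 1 <= Phi (lam k) Q.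
{ move=> Q. have := G_ge _ (fun p : S * A => lam k * err Q p). rewrite card_prod.
  have := exp_le_3. rewrite /Phi. lra. }
eapply Rle_trans.
{ apply: Ev_mono; auto.
  instantiate (1 := fun Q => / (lam k ^ 2) * (ln (Phi (lam k) Q) * ln (Phi (lam k) Q))).
  move=> Q. have h := sup_le_lnPhi (lam k) Q ltac:(lra).
  have h0 := sup_ge0 _ _ (Qsub Q Qstar).
  have h1 : supnorm (Qsub Q Qstar) <= ln (Phi (lam k) Q) / lam k.
  { apply (Rmult_le_reg_r (lam k)); [lra|]. field_simplify; lra. }
  have -> : / lam k ^ 2 * (ln (Phi (lam k) Q) * ln (Phi (lam k) Q)) = (ln (Phi (lam k) Q) / lam k) ^ 2.
  { field. lra. }
  apply pow_incr. lra. }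
rewrite Ev_scale.
have HJ := Ev_jensen_lnsq _ _ P rew beta eps hP_nonneg hP_sum 0 k (Phi (lam k)) Q0 Hg.
have HU := mainU k.
set m := Ev P rew beta eps 0 k (Phi (lam k)) Q0 in HJ HU *.
have Hm : 1 <= m by (apply: Ev_ge; auto; move=> Q; apply G_ge1, hSA).
have Hlm : 0 <= ln m by (rewrite -ln_1; apply ln_le; lra).
have Hlv : ln m / lam k <= vv k.
{ apply (Rmult_le_reg_r (lam k)); [lra|]. field_simplify; lra. }
eapply Rle_trans.
{ apply Rmult_le_compat_l; [apply Rlt_le, Rinv_0_lt_compat, pow_lt; lra| exact HJ]. }
have -> : / lam k ^ 2 * (ln m * ln m) = (ln m / lam k) ^ 2 by field; lra.
apply pow_incr. split; [apply Rmult_le_pos; [lra| apply Rlt_le, Rinv_0_lt_compat; lra]| exact Hlv].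
Qed.
End Main.




End Core.

Lemma le_div_mul a x y : 0 < y -> a <= x / y -> a * y <= x.
Proof. intros Hy H. apply (Rmult_le_compat_r y) in H; [|lra]. field_simplify in H; lra. Qed.

Lemma cc_sq_bound q : 0 <= q -> (1 + 2 * q) ^ 2 <= 4 * (1 + 2 * q ^ 2).
Proof. intros; nra. Qed.

Lemma sq_sum_bound x y : (x + y) ^ 2 <= 3 / 2 * x ^ 2 + 3 * y ^ 2.
Proof. have := pow2_ge_0 (x - 2 * y). nra. Qed.

Lemma le_div_le1 x d : 0 <= x -> 0 < d <= 1 -> x <= x / d.
Proof.
intros Hx Hd. apply (Rmult_le_reg_r d); [lra|].
unfold Rdiv. rewrite Rmult_assoc Rinv_l; [|lra]. nra.
Qed.

Lemma two_le_e : 2 <= exp 1.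
Proof. have := exp_ineq1_le 1. lra. Qed.

Section PartA.
Variables (S A : finType) (P : A -> S -> S -> R) (rew : S -> A -> R) (beta : R) (Qstar : S -> A -> R).
Hypothesis hP_nonneg : forall a s s', 0 <= P a s s'.
Hypothesis hP_sum : forall a s, \big[Rplus/0]_(s' : S) P a s s' = 1.
Hypothesis hbeta : 0 < beta < 1.
Hypothesis hfix : forall s a, bellman P rew beta Qstar s a = Qstar s a.
Variable a0 : A.
Hypothesis hS : (0 < #|S|)%nat.
Hypothesis hA : (0 < #|A|)%nat.
Hypothesis HN : 2 <= INR (#|S| * #|A|).
Local Notation ccq := (cc S A Qstar).
Local Notation qsq := (qs S A Qstar).

Lemma lnN_facts : / 2 < ln (INR (#|S| * #|A|)) /\
  lnN2 S A = ln 2 + ln (INR (#|S| * #|A|)) /\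
  lnN2 S A <= 2 * ln (INR (#|S| * #|A|)) /\ 0 < lnN2 S A.
Proof.
have h2 := ln_lt_2.
have hl : ln 2 <= ln (INR (#|S| * #|A|)) by apply ln_le; lra.
have he : lnN2 S A = ln 2 + ln (INR (#|S| * #|A|)) by rewrite /lnN2 ln_mult; lra.
repeat split; lra.
Qed.

Lemma partA (Q0 : S -> A -> R) (eps0 : R) :
  0 < eps0 -> eps0 <= (1 - beta) ^ 2 / (640 * exp 1 * ln (INR (#|S| * #|A|))) ->
  forall k : nat,
    Ev P rew beta (fun _ => eps0) 0 k (fun Q => (supnorm (Qsub Q Qstar)) ^ 2) Q0
    <= 3 / 2 * (supnorm (Qsub Q0 Qstar)) ^ 2 * (1 - (1 - beta) * eps0 / 2) ^ k
       + (1 + 2 * (supnorm Qstar) ^ 2)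
         * (256 * exp 1 * ln (INR (#|S| * #|A|)) * eps0 / (1 - beta) ^ 2).
Proof.
intros He0 Heps k.
have [hlnN [hL2 [hL2le hL2pos]]] := lnN_facts.
set lnN := ln (INR (#|S| * #|A|)) in hlnN hL2 hL2le Heps *.
set L2 := lnN2 S A in hL2 hL2le hL2pos *.
have he := two_le_e.
have hq : 0 <= qsq by apply (sup_ge0 _ _ Qstar).
have hcc : 1 <= ccq by (rewrite /cc; lra).
have Hel : eps0 * lnN <= / 1280.
{ have h0 : 0 < 640 * exp 1 * lnN by (apply Rmult_lt_0_compat; [lra|]; lra).
  have h := le_div_mul _ _ _ h0 Heps.
  have : (1 - beta) ^ 2 <= 1 by nra.
  nra. }
have He1 : eps0 <= 1.
{ have := Rmult_le_compat_l eps0 (/2) lnN ltac:(lra) ltac:(lra). lra. }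
set lam := sqrt (L2 / (2 * eps0 * ccq ^ 2)).
have Hden : 0 < 2 * eps0 * ccq ^ 2 by (apply Rmult_lt_0_compat; [lra| apply pow_lt; lra]).
have Hlpos : 0 < lam by (apply sqrt_lt_R0; apply Rdiv_lt_0_compat; lra).
have Hl2 : lam ^ 2 = L2 / (2 * eps0 * ccq ^ 2).
{ rewrite /lam -Rsqr_pow2 Rsqr_sqrt //. apply Rlt_le, Rdiv_lt_0_compat; lra. }
have HL2 : L2 = 2 * lam ^ 2 * eps0 * ccq ^ 2 by rewrite Hl2; field; lra.
set rho := 1 - eps0 * (1 - beta).
have Hrho : 0 <= rho <= 1 by (rewrite /rho; nra).
have HC : lam * eps0 * ccq <= / 2.
{ have h : (lam * eps0 * ccq) ^ 2 <= / 4.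
  { have -> : (lam * eps0 * ccq) ^ 2 = L2 * eps0 / 2 by rewrite HL2; field.
    nra. }
  have : 0 <= lam * eps0 * ccq by (apply Rmult_le_pos; [apply Rmult_le_pos|]; lra).
  nra. }
have Hcon0 : lam * (1 - eps0 * (1 - beta)) <= lam.
{ have : 0 <= lam * (eps0 * (1 - beta)) by (apply Rmult_le_pos; [lra| apply Rmult_le_pos; lra]).
  lra. }
have HE := mainE S A P rew beta Qstar hP_nonneg hP_sum hbeta hfix a0 hS hA HN
  (fun _ => eps0) (fun _ => lam) Q0 (fun _ => conj He0 He1) (fun _ => Hlpos)
  (fun _ => Rle_refl _) (fun _ => Hcon0) (fun _ => HC) k.
set E0 := supnorm (Qsub Q0 Qstar) in HE *.
have HE0 : 0 <= E0 by apply (sup_ge0 _ _ (Qsub Q0 Qstar)).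
set Bc := (L2 / lam + 2 * lam * eps0 * ccq ^ 2) / (1 - beta).
have HBc : 0 <= Bc.
{ rewrite /Bc. apply Rmult_le_pos; [|apply Rlt_le, Rinv_0_lt_compat; lra].
  apply Rplus_le_le_0_compat; [apply Rmult_le_pos; [lra| apply Rlt_le, Rinv_0_lt_compat; lra]| nra]. }
have Hvv : forall j, 0 <= vv S A beta Qstar (fun _ => eps0) (fun _ => lam) Q0 j <= rho ^ j * E0 + Bc.
{ have Hv0 : vv S A beta Qstar (fun _ => eps0) (fun _ => lam) Q0 0 = L2 / lam + E0 by [].
  have Hvs : forall j, vv S A beta Qstar (fun _ => eps0) (fun _ => lam) Q0 j.+1 =
     rho * vv S A beta Qstar (fun _ => eps0) (fun _ => lam) Q0 j + 2 * lam * eps0 ^ 2 * ccq ^ 2 + eps0 * L2 / lam by [].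
  elim=> [|j [IH1 IH2]]; [rewrite Hv0| rewrite Hvs].
  - split.
    + apply Rplus_le_le_0_compat; [apply Rmult_le_pos; [lra| apply Rlt_le, Rinv_0_lt_compat; lra]| lra].
    + rewrite /Bc.
      have h1 : 0 <= L2 / lam by (apply Rmult_le_pos; [lra| apply Rlt_le, Rinv_0_lt_compat; lra]).
      have h2 : 0 <= 2 * lam * eps0 * ccq ^ 2 by (apply Rmult_le_pos; [nra| apply pow2_ge_0]).
      have := le_div_le1 (L2 / lam + 2 * lam * eps0 * ccq ^ 2) (1 - beta) ltac:(lra) ltac:(lra).
      lra.
  - split.
    + have : 0 <= eps0 * L2 / lam by (apply Rmult_le_pos; [nra| apply Rlt_le, Rinv_0_lt_compat; lra]).
      have : 0 <= 2 * lam * eps0 ^ 2 * ccq ^ 2 by (apply Rmult_le_pos; nra).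
      nra.
    + have h1 : rho * vv S A beta Qstar (fun _ => eps0) (fun _ => lam) Q0 j <= rho * (rho ^ j * E0 + Bc).
      { apply Rmult_le_compat_l; lra. }
      have h2 : 2 * lam * eps0 ^ 2 * ccq ^ 2 + eps0 * L2 / lam = eps0 * (1 - beta) * Bc.
      { rewrite /Bc. field. lra. }
      have h3 : rho * Bc + eps0 * (1 - beta) * Bc = Bc by (rewrite /rho; ring).
      have -> : rho ^ j.+1 * E0 = rho * (rho ^ j * E0) by rewrite /=; ring.
      have h4 : rho * (rho ^ j * E0 + Bc) = rho * (rho ^ j * E0) + rho * Bc by ring.
      lra. }
have [Hv1 Hv2] := Hvv k.
eapply Rle_trans; [exact HE|].
set tg := 1 - (1 - beta) * eps0 / 2.
have Hrk : 0 <= rho ^ k <= 1.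
{ split; [apply pow_le; lra|]. rewrite -(pow1 k). apply pow_incr; lra. }
have Hrt : rho ^ k <= tg ^ k by (apply pow_incr; rewrite /rho /tg; nra).
have Hsq : vv S A beta Qstar (fun _ => eps0) (fun _ => lam) Q0 k ^ 2 <= (rho ^ k * E0 + Bc) ^ 2.
{ apply pow_incr; lra. }
eapply Rle_trans; [exact Hsq|]. eapply Rle_trans; [apply sq_sum_bound|].
apply Rplus_le_compat.
- have -> : (rho ^ k * E0) ^ 2 = (rho ^ k * rho ^ k) * E0 ^ 2 by ring.
  have : rho ^ k * rho ^ k <= tg ^ k.
  { have : rho ^ k * rho ^ k <= rho ^ k * 1 by (apply Rmult_le_compat_l; lra). lra. }
  have := pow2_ge_0 E0. intros. 
  have : rho ^ k * rho ^ k * E0 ^ 2 <= tg ^ k * E0 ^ 2 by (apply Rmult_le_compat_r; lra).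
  lra.
- have Hb : Bc = 4 * lam * eps0 * ccq ^ 2 / (1 - beta).
  { rewrite /Bc HL2. field. lra. }
  set D := eps0 / (1 - beta) ^ 2.
  have HD : 0 < D by (apply Rdiv_lt_0_compat; [lra| apply pow_lt; lra]).
  have -> : 3 * Bc ^ 2 = 24 * (L2 * ccq ^ 2) * D.
  { rewrite Hb /D HL2. field. lra. }
  have -> : (1 + 2 * supnorm Qstar ^ 2) * (256 * exp 1 * lnN * eps0 / (1 - beta) ^ 2)
           = 256 * exp 1 * ((1 + 2 * qsq ^ 2) * lnN) * D.
  { rewrite /D /qs. field. lra. }
  have hX : 0 < 1 + 2 * qsq ^ 2 by (have := pow2_ge_0 qsq; lra).
  have h1 : L2 * ccq ^ 2 <= (2 * lnN) * (4 * (1 + 2 * qsq ^ 2)).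
  { apply Rmult_le_compat; [lra| apply pow2_ge_0| lra| apply cc_sq_bound; lra]. }
  have h2 : 0 <= (1 + 2 * qsq ^ 2) * lnN by (apply Rmult_le_pos; lra).
  have h3 : 24 * (L2 * ccq ^ 2) <= 256 * exp 1 * ((1 + 2 * qsq ^ 2) * lnN).
  { have : 512 * ((1 + 2 * qsq ^ 2) * lnN) <= 256 * exp 1 * ((1 + 2 * qsq ^ 2) * lnN).
    { have := Rmult_le_compat_r _ _ _ h2 he. lra. }
    lra. }
  apply Rmult_le_compat_r; lra.
Qed.
End PartA.

Lemma t_s_bound s t : 1 <= s -> 0 < t -> t ^ 2 = s ^ 2 + 1 -> t * (s ^ 2 - 1) <= s ^ 3.
Proof.
intros Hs Ht Ht2.
have h0 : 0 <= t * (s ^ 2 - 1) by (apply Rmult_le_pos; nra).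
have h1 : (t * (s ^ 2 - 1)) ^ 2 <= (s ^ 3) ^ 2.
{ have -> : (t * (s ^ 2 - 1)) ^ 2 = t ^ 2 * (s ^ 2 - 1) ^ 2 by ring.
  rewrite Ht2. nra. }
have h2 : 0 <= s ^ 3 by (apply pow_le; lra).
nra.
Qed.

Lemma stepB s t C0 ae : 1 <= s -> 0 < t -> t ^ 2 = s ^ 2 + 1 -> 0 <= ae -> 2 * ae <= C0 ->
  (1 - 4 / s ^ 2) * (C0 / s) + 2 * ae * t / s ^ 4 + ae / (s ^ 2 * t) <= C0 / t.
Proof.
intros Hs Ht Ht2 Hae HC.
have hts := t_s_bound s t Hs Ht Ht2.
have hst : s <= t by nra.
have Hsp : 0 < s by lra.
apply (Rmult_le_reg_r (s ^ 4 * t)); [apply Rmult_lt_0_compat; [apply pow_lt|]; lra|].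
have -> : ((1 - 4 / s ^ 2) * (C0 / s) + 2 * ae * t / s ^ 4 + ae / (s ^ 2 * t)) * (s ^ 4 * t)
   = (s ^ 2 - 4) * C0 * s * t + ae * (2 * t ^ 2 + s ^ 2) by (field; lra).
have -> : C0 / t * (s ^ 4 * t) = C0 * s ^ 4 by (field; lra).
rewrite Ht2.
have hC0 : 0 <= C0 by lra.
have h1 : C0 * ((s ^ 2 - 1) * s * t) <= C0 * s ^ 4.
{ apply Rmult_le_compat_l; [lra|]. have -> : (s ^ 2 - 1) * s * t = s * (t * (s ^ 2 - 1)) by ring.
  have -> : s ^ 4 = s * s ^ 3 by ring. apply Rmult_le_compat_l; lra. }
have h2 : 2 * ae * (s * s) <= C0 * (s * t).
{ apply Rmult_le_compat; [lra| nra| lra| apply Rmult_le_compat_l; lra]. }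
have e1 : (s ^ 2 - 4) * C0 * s * t = C0 * ((s ^ 2 - 1) * s * t) - 3 * (C0 * (s * t)) by ring.
have e2 : ae * (2 * (s ^ 2 + 1) + s ^ 2) = 3 * (ae * (s * s)) + 2 * ae by ring.
have h3 : ae * 1 <= ae * (s * s) by (apply Rmult_le_compat_l; nra).
lra.
Qed.

Section PartB.
Variables (S A : finType) (P : A -> S -> S -> R) (rew : S -> A -> R) (beta : R) (Qstar : S -> A -> R).
Hypothesis hP_nonneg : forall a s s', 0 <= P a s s'.
Hypothesis hP_sum : forall a s, \big[Rplus/0]_(s' : S) P a s s' = 1.
Hypothesis hbeta : 0 < beta < 1.
Hypothesis hfix : forall s a, bellman P rew beta Qstar s a = Qstar s a.
Variable a0 : A.
Hypothesis hS : (0 < #|S|)%nat.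
Hypothesis hA : (0 < #|A|)%nat.
Hypothesis HN : 2 <= INR (#|S| * #|A|).
Local Notation ccq := (cc S A Qstar).
Local Notation qsq := (qs S A Qstar).

Lemma partB (Q0 : S -> A -> R) :
  (let eps := 4 / (1 - beta) in
   let K := 640 * exp 1 * ln (INR (#|S| * #|A|)%nat) / (1 - beta) ^ 3 in
   forall k : nat,
     Ev P rew beta (fun j => eps / (INR j + K)) 0 k
        (fun Q => (supnorm (Qsub Q Qstar)) ^ 2) Q0
     <= 8192 * (exp 1) ^ 2
        * (1 + 2 * (supnorm Qstar) ^ 2 + (supnorm (Qsub Q0 Qstar)) ^ 2)
        * (ln (INR (#|S| * #|A|)%nat) / (1 - beta) ^ 3) * (1 / (INR k + K))).
Proof.
intros ep K k.
have [hlnN [hL2 [hL2le hL2pos]]] := lnN_facts S A beta hbeta HN.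
set lnN := ln (INR (#|S| * #|A|)) in hlnN hL2 hL2le K *.
set L2 := lnN2 S A in hL2 hL2le hL2pos *.
have he := two_le_e.
have hq : 0 <= qsq by apply (sup_ge0 _ _ Qstar).
have hcc : 1 <= ccq by (rewrite /cc; lra).
set u := 1 - beta.
have Hu : 0 < u <= 1 by (rewrite /u; lra).
have Hep : ep = 4 / u by [].
have Hep4 : 4 <= ep by (rewrite Hep; apply (Rmult_le_reg_r u); [lra|]; field_simplify; lra).
have Hepu : ep * u = 4 by (rewrite Hep; field; lra).
have HK : K = 640 * exp 1 * lnN / u ^ 3 by [].
have Hu3 : 0 < u ^ 3 by apply pow_lt; lra.
have HKge : 1280 * lnN / u <= K.
{ rewrite HK. apply (Rmult_le_reg_r (u ^ 3)); [lra|].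
  have -> : 640 * exp 1 * lnN / u ^ 3 * u ^ 3 = 640 * exp 1 * lnN by field; lra.
  have -> : 1280 * lnN / u * u ^ 3 = 1280 * lnN * u ^ 2 by field; lra.
  have : u ^ 2 <= 1 by nra.
  have : 0 < lnN by lra. nra. }
have HKpos : 640 <= K.
{ have : 1280 * lnN <= 1280 * lnN / u by (apply le_div_le1; lra).
  lra. }
have HepK : ep * L2 <= K / 160.
{ have : ep * L2 <= 8 * lnN / u.
  { rewrite Hep. have -> : 8 * lnN / u = 4 / u * (2 * lnN) by field; lra.
    apply Rmult_le_compat_l; [apply Rlt_le, Rdiv_lt_0_compat; lra| lra]. }
  lra. }
set r := sqrt (ep * L2).
have Hr0 : 0 < ep * L2 by (apply Rmult_lt_0_compat; lra).
have Hr : 0 < r by apply sqrt_lt_R0.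
have Hr2 : r ^ 2 = ep * L2 by rewrite /r -Rsqr_pow2 Rsqr_sqrt; lra.
set alpha := ccq * r.
set mu := r / (ep * ccq).
have Hal : 0 < alpha by (apply Rmult_lt_0_compat; lra).
have Hmu : 0 < mu by (apply Rdiv_lt_0_compat; [lra| apply Rmult_lt_0_compat; lra]).
have Hmual : L2 / mu = alpha by (rewrite /mu /alpha; apply (Rmult_eq_reg_r r); [|lra];
   field_simplify; [rewrite Hr2; field|]; lra).
have Hmuep : mu * ep * ccq = r by (rewrite /mu; field; lra).
set nn := fun j : nat => INR j + K.
set sq := fun j : nat => sqrt (nn j).
have Hnn : forall j, K <= nn j by (move=> j; rewrite /nn; have := pos_INR j; lra).
have Hnn1 : forall j, nn j.+1 = nn j + 1 by (move=> j; rewrite /nn S_INR; lra).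
have Hsq2 : forall j, sq j ^ 2 = nn j.
{ move=> j. rewrite /sq -Rsqr_pow2 Rsqr_sqrt //. have := Hnn j. lra. }
have Hsqp : forall j, 0 < sq j by (move=> j; apply sqrt_lt_R0; have := Hnn j; lra).
have Hsq1 : forall j, 1 <= sq j.
{ move=> j. have h := Hsq2 j. have := Hnn j. have := Hsqp j. nra. }
set eps := fun j : nat => ep / nn j.
set lam := fun j : nat => mu * sq j.
have Hepk : ep <= K.
{ have : 4 / u <= 1280 * lnN / u.
  { apply Rmult_le_compat_r; [apply Rlt_le, Rinv_0_lt_compat; lra| lra]. }
  rewrite Hep. lra. }
have Heps : forall j, 0 < eps j <= 1.
{ move=> j. have := Hnn j. intros h. rewrite /eps. split.
  - apply Rdiv_lt_0_compat; lra.
  - apply (Rmult_le_reg_r (nn j)); [lra|]. field_simplify; lra. }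
have Hlam : forall j, 0 < lam j by (move=> j; apply Rmult_lt_0_compat; auto).
have Hmon : forall j, lam j <= lam j.+1.
{ move=> j. rewrite /lam. apply Rmult_le_compat_l; [lra|]. rewrite /sq Hnn1.
  apply sqrt_le_1_alt; lra. }
have Hts : forall j, sq j.+1 ^ 2 = sq j ^ 2 + 1 by (move=> j; rewrite !Hsq2 Hnn1).
have Hepsj : forall j, eps j = ep / sq j ^ 2 by (move=> j; rewrite Hsq2).
have Hcon : forall j, lam j.+1 * (1 - eps j * (1 - beta)) <= lam j.
{ move=> j. rewrite /lam Hepsj -/u.
  have hs := Hsq1 j. have ht := Hsqp j.+1.
  have hts := t_s_bound (sq j) (sq j.+1) hs ht (Hts j).
  have -> : 1 - ep / sq j ^ 2 * u = 1 - 4 / sq j ^ 2.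
  { rewrite -Hepu. field. lra. }
  have : sq j.+1 * (1 - 4 / sq j ^ 2) <= sq j.
  { apply (Rmult_le_reg_r (sq j ^ 2)); [apply pow_lt; lra|].
    have -> : sq j.+1 * (1 - 4 / sq j ^ 2) * sq j ^ 2 = sq j.+1 * (sq j ^ 2 - 4) by (field; lra).
    have -> : sq j * sq j ^ 2 = sq j ^ 3 by ring.
    have : sq j.+1 * (sq j ^ 2 - 4) <= sq j.+1 * (sq j ^ 2 - 1) by (apply Rmult_le_compat_l; lra).
    lra. }
  intros h. have := Rmult_le_compat_l mu _ _ (Rlt_le _ _ Hmu) h. lra. }
have Hc : forall j, lam j.+1 * eps j * ccq <= / 2.
{ move=> j. rewrite /lam Hepsj.
  have hs := Hsq1 j. have ht := Hsqp j.+1.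
  have -> : mu * sq j.+1 * (ep / sq j ^ 2) * ccq = r * sq j.+1 / sq j ^ 2.
  { rewrite -Hmuep. field. lra. }
  set s0 := sq j in hs *. set t0 := sq j.+1 in ht *.
  have Hs2 : K <= s0 ^ 2 by (rewrite /s0 Hsq2; apply Hnn).
  have Ht2 : t0 ^ 2 = s0 ^ 2 + 1 by apply Hts.
  have hpos : 0 <= r * t0 / s0 ^ 2 by (apply Rmult_le_pos; [nra| apply Rlt_le, Rinv_0_lt_compat, pow_lt; lra]).
  have hsq : (r * t0 / s0 ^ 2) ^ 2 <= / 80.
  { have -> : (r * t0 / s0 ^ 2) ^ 2 = r ^ 2 * t0 ^ 2 / (s0 ^ 2) ^ 2 by (field; lra).
    rewrite Hr2 Ht2.
    apply (Rmult_le_reg_r ((s0 ^ 2) ^ 2)); [apply pow_lt, pow_lt; lra|].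
    have -> : ep * L2 * (s0 ^ 2 + 1) / (s0 ^ 2) ^ 2 * (s0 ^ 2) ^ 2 = ep * L2 * (s0 ^ 2 + 1) by (field; lra).
    have h1 : ep * L2 <= s0 ^ 2 / 160 by lra.
    have h2 : s0 ^ 2 + 1 <= 2 * s0 ^ 2 by lra.
    have h3 : ep * L2 * (s0 ^ 2 + 1) <= s0 ^ 2 / 160 * (2 * s0 ^ 2).
    { apply Rmult_le_compat; lra. }
    lra. }
  nra. }
have HE := mainE S A P rew beta Qstar hP_nonneg hP_sum hbeta hfix a0 hS hA HN
  eps lam Q0 Heps Hlam Hmon Hcon Hc k.
set E0 := supnorm (Qsub Q0 Qstar) in HE *.
have HE0 : 0 <= E0 by apply (sup_ge0 _ _ (Qsub Q0 Qstar)).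
set ae := alpha * ep.
have Hae : 0 <= ae by (apply Rmult_le_pos; lra).
set C0 := alpha + 2 * ae + sqrt K * E0.
have HsK : 0 < sqrt K by (apply sqrt_lt_R0; lra).
have HsK0 : sq 0%nat = sqrt K by rewrite /sq /nn /=; f_equal; lra.
have Hvv : forall j, 0 <= vv S A beta Qstar eps lam Q0 j <= C0 / sq j.
{ have Hv0 : vv S A beta Qstar eps lam Q0 0%nat = L2 / lam 0%nat + E0 by [].
  have Hvs : forall j, vv S A beta Qstar eps lam Q0 j.+1 =
     (1 - eps j * (1 - beta)) * vv S A beta Qstar eps lam Q0 j + 2 * lam j.+1 * eps j ^ 2 * ccq ^ 2
     + eps j * L2 / lam j.+1 by [].
  elim=> [|j [IH1 IH2]]; [rewrite Hv0| rewrite Hvs].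
  - have -> : L2 / lam 0%nat = alpha / sq 0%nat by (rewrite /lam -Hmual; field; split; apply Rgt_not_eq; auto).
    rewrite HsK0. split.
    + have : 0 <= alpha / sqrt K by (apply Rmult_le_pos; [lra| apply Rlt_le, Rinv_0_lt_compat; lra]). lra.
    + have -> : alpha / sqrt K + E0 = (alpha + sqrt K * E0) / sqrt K by (field; lra).
      apply Rmult_le_compat_r; [apply Rlt_le, Rinv_0_lt_compat; lra| rewrite /C0; lra].
  - have hs := Hsq1 j. have ht := Hsqp j.+1.
    change (lam j.+1) with (mu * sq j.+1). rewrite Hepsj -/u.
    have -> : 1 - ep / sq j ^ 2 * u = 1 - 4 / sq j ^ 2 by (rewrite -Hepu; field; lra).
    have -> : 2 * (mu * sq j.+1) * (ep / sq j ^ 2) ^ 2 * ccq ^ 2 = 2 * ae * sq j.+1 / sq j ^ 4.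
    { rewrite /ae /alpha -Hmuep. field. lra. }
    have -> : ep / sq j ^ 2 * L2 / (mu * sq j.+1) = ae / (sq j ^ 2 * sq j.+1).
    { rewrite /ae -Hmual. field. lra. }
    have hrho : 0 <= 1 - 4 / sq j ^ 2.
    { have : 640 <= sq j ^ 2 by (rewrite Hsq2; have := Hnn j; lra).
      intros h. apply (Rmult_le_reg_r (sq j ^ 2)); [lra|]. field_simplify; lra. }
    have hA1 : 0 <= 2 * ae * sq j.+1 / sq j ^ 4.
    { apply Rmult_le_pos; [nra| apply Rlt_le, Rinv_0_lt_compat, pow_lt; lra]. }
    have hA2 : 0 <= ae / (sq j ^ 2 * sq j.+1).
    { apply Rmult_le_pos; [lra| apply Rlt_le, Rinv_0_lt_compat, Rmult_lt_0_compat; [apply pow_lt|]; lra]. }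
    split.
    + have := Rmult_le_pos _ _ hrho IH1. lra.
    + have h1 := Rmult_le_compat_l _ _ _ hrho IH2.
      have h2 := stepB (sq j) (sq j.+1) C0 ae hs ht (Hts j) Hae ltac:(rewrite /C0; nra).
      lra. }
have [Hv1 Hv2] := Hvv k.
eapply Rle_trans; [exact HE|].
have hsk := Hsqp k.
have Hsq : vv S A beta Qstar eps lam Q0 k ^ 2 <= C0 ^ 2 / nn k.
{ rewrite -Hsq2. have -> : C0 ^ 2 / sq k ^ 2 = (C0 / sq k) ^ 2 by (field; lra).
  apply pow_incr; lra. }
eapply Rle_trans; [exact Hsq|].
set Z := lnN / u ^ 3.
have HZ : 0 < Z by (apply Rdiv_lt_0_compat; lra).
have HX : 0 <= qsq ^ 2 by apply pow2_ge_0.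
have HC0 : C0 ^ 2 <= (5184 * (1 + 2 * qsq ^ 2) + 1280 * exp 1 * E0 ^ 2) * Z.
{ have e1 : C0 = alpha * (1 + 2 * ep) + sqrt K * E0 by (rewrite /C0 /ae; ring).
  have h1 : C0 ^ 2 <= 2 * (alpha * (1 + 2 * ep)) ^ 2 + 2 * (sqrt K * E0) ^ 2.
  { rewrite e1. have := pow2_ge_0 (alpha * (1 + 2 * ep) - sqrt K * E0). nra. }
  have h2 : (sqrt K * E0) ^ 2 = 640 * exp 1 * E0 ^ 2 * Z.
  { have -> : (sqrt K * E0) ^ 2 = sqrt K ^ 2 * E0 ^ 2 by ring.
    rewrite -Rsqr_pow2 Rsqr_sqrt; [|lra]. rewrite HK /Z. field. lra. }
  have h3 : (alpha * (1 + 2 * ep)) ^ 2 <= 324 * ccq ^ 2 * L2 / u ^ 3.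
  { have -> : (alpha * (1 + 2 * ep)) ^ 2 = ccq ^ 2 * r ^ 2 * (1 + 2 * ep) ^ 2 by (rewrite /alpha; ring).
    rewrite Hr2.
    have h4 : (1 + 2 * ep) ^ 2 <= 81 / 16 * ep ^ 2 by nra.
    have h5 : 0 <= ccq ^ 2 * (ep * L2) by (apply Rmult_le_pos; [apply pow2_ge_0| lra]).
    have h6 := Rmult_le_compat_l _ _ _ h5 h4.
    have -> : 324 * ccq ^ 2 * L2 / u ^ 3 = ccq ^ 2 * (ep * L2) * (81 / 16 * ep ^ 2).
    { rewrite Hep. field. lra. }
    lra. }
  have h7 : 324 * ccq ^ 2 * L2 / u ^ 3 <= 2592 * (1 + 2 * qsq ^ 2) * Z.
  { have h8 : ccq ^ 2 * L2 <= (4 * (1 + 2 * qsq ^ 2)) * (2 * lnN).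
    { apply Rmult_le_compat; [apply pow2_ge_0| lra| apply cc_sq_bound; lra| lra]. }
    have -> : 324 * ccq ^ 2 * L2 / u ^ 3 = 324 * (ccq ^ 2 * L2) / u ^ 3 by (unfold Rdiv; ring).
    have -> : 2592 * (1 + 2 * qsq ^ 2) * Z = 324 * ((4 * (1 + 2 * qsq ^ 2)) * (2 * lnN)) / u ^ 3.
    { rewrite /Z. field. lra. }
    apply Rmult_le_compat_r; [apply Rlt_le, Rinv_0_lt_compat; lra| lra]. }
  lra. }
have HT : (5184 * (1 + 2 * qsq ^ 2) + 1280 * exp 1 * E0 ^ 2) * Z <=
          8192 * exp 1 ^ 2 * (1 + 2 * qsq ^ 2 + E0 ^ 2) * Z.
{ apply Rmult_le_compat_r; [lra|].
  have hE : 0 <= E0 ^ 2 by apply pow2_ge_0.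
  have he2 : 4 <= exp 1 ^ 2 by nra.
  have ha : 5184 * (1 + 2 * qsq ^ 2) <= 8192 * exp 1 ^ 2 * (1 + 2 * qsq ^ 2) by nra.
  have hb : 1280 * exp 1 * E0 ^ 2 <= 8192 * exp 1 ^ 2 * E0 ^ 2.
  { apply Rmult_le_compat_r; [lra|]. nra. }
  lra. }
have Hn : 0 < nn k by (have := Hnn k; lra).
have -> : 8192 * exp 1 ^ 2 * (1 + 2 * supnorm Qstar ^ 2 + E0 ^ 2) * Z * (1 / (INR k + K))
         = (8192 * exp 1 ^ 2 * (1 + 2 * qsq ^ 2 + E0 ^ 2) * Z) / nn k.
{ have Hn2 : 0 < INR k + K by (have := pos_INR k; lra). rewrite /nn /qs. field. lra. }
apply Rmult_le_compat_r; [apply Rlt_le, Rinv_0_lt_compat; lra| lra].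
Qed.
End PartB.

Theorem theorem5 (St Ac : finType) (P : Ac -> St -> St -> R) (rew : St -> Ac -> R)
  (beta : R) (Q0 Qstar : St -> Ac -> R)
  (hP_nonneg : forall a s s', 0 <= P a s s')
  (hP_sum : forall a s, \big[Rplus/0]_(s' : St) P a s s' = 1)
  (hrew : forall s a, 0 <= rew s a <= 1)
  (hbeta : 0 < beta < 1)
  (hcard : (2 <= #|St| * #|Ac|)%nat)
  (hfix : forall s a, bellman P rew beta Qstar s a = Qstar s a) :
  (* (a) constant step size *)
  (forall eps : R, 0 < eps ->
     eps <= (1 - beta) ^ 2 / (640 * exp 1 * ln (INR (#|St| * #|Ac|)%nat)) ->
     forall k : nat,
       Ev P rew beta (fun _ => eps) 0 k
          (fun Q => (supnorm (Qsub Q Qstar)) ^ 2) Q0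
       <= 3 / 2 * (supnorm (Qsub Q0 Qstar)) ^ 2 * (1 - (1 - beta) * eps / 2) ^ k
          + (1 + 2 * (supnorm Qstar) ^ 2)
            * (256 * exp 1 * ln (INR (#|St| * #|Ac|)%nat) * eps / (1 - beta) ^ 2))
  /\
  (* (b) diminishing step size eps_k = eps / (k + K) *)
  (let eps := 4 / (1 - beta) in
   let K := 640 * exp 1 * ln (INR (#|St| * #|Ac|)%nat) / (1 - beta) ^ 3 in
   forall k : nat,
     Ev P rew beta (fun j => eps / (INR j + K)) 0 k
        (fun Q => (supnorm (Qsub Q Qstar)) ^ 2) Q0
     <= 8192 * (exp 1) ^ 2
        * (1 + 2 * (supnorm Qstar) ^ 2 + (supnorm (Qsub Q0 Qstar)) ^ 2)
        * (ln (INR (#|St| * #|Ac|)%nat) / (1 - beta) ^ 3) * (1 / (INR k + K))).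
Proof.
have hSA : (0 < #|St| * #|Ac|)%nat by apply: leq_trans hcard.
rewrite muln_gt0 in hSA. case/andP: hSA => hS hA.
case/card_gt0P: (hA) => a0 _.
have HN : 2 <= INR (#|St| * #|Ac|).
{ have h : (2 <= #|St| * #|Ac|)%coq_nat by apply/leP.
  have := le_INR _ _ h. simpl. lra. }
split.
- move=> eps He Heps k.
  exact (partA St Ac P rew beta Qstar hP_nonneg hP_sum hbeta hfix a0 hS hA HN Q0 eps He Heps k).
- exact (partB St Ac P rew beta Qstar hP_nonneg hP_sum hbeta hfix a0 hS hA HN Q0).
Qed.
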